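(* Let $G$ be a directed graph, let $a, b, k \geq 1$ be integers, and let $D$ be a well-linked set in $G$ of size $2(ab(2k-2)+1)$. If $G$ does not contain a family of $k$ directed cycles such that every vertex of $G$ is in at most two of the cycles, then there exist paths $P_1,\ldots,P_a$ in $G$ and sets $A_i, B_i \subseteq V(P_i)$ for $1 \leq i \leq a$ such that: (1) the paths $P_1,\ldots,P_a$ are pairwise vertex-disjoint; (2) the sets $A_1,B_1,\ldots,A_a,B_a$ each have size $b$ and are pairwise disjoint; (3) for every $1 \leq i \leq a$, all vertices of $A_i$ appear on $P_i$ before all vertices of $B_i$; (4) $\bigcup_{i=1}^a (A_i \cup B_i)$ is well-linked in $G$.
   Context: For $A,B\subseteq V(G)$ with $|A|=|B|$, a linkage from $A$ to $B$ is a set of $|A|$ pairwise vertex-disjoint directed paths each starting in $A$ and ending in $B$. A set $W\subseteq V(G)$ is well-linked if for all $A,B\subseteq W$ with $|A|=|B|$ there is a linkage from $A$ to $B$ in $G-(W\setminus(A\cup B))$. *)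

(* Defs.v *)
From mathcomp Require Import all_boot.
Set Implicit Arguments. Unset Strict Implicit. Unset Printing Implicit Defensive.

(* A directed graph is a relation e on a finite vertex type T:
   there is an arc x -> y iff e x y. *)

Definition dpath (T : finType) (e : rel T) (p : seq T) : bool :=
  if p is x :: s then path e x s && uniq p else false.

(* A linkage from A to B in G - X (|A| = |B|): a set of |A| pairwise
   vertex-disjoint directed paths, each starting in A and ending in B,
   and using no vertex of X. (uniq (flatten P) = the paths are pairwise
   vertex-disjoint and each is duplicate free.) *)
Definition linkage_avoiding (T : finType) (e : rel T) (X A B : {set T}) : Prop :=
  exists P : seq (seq T),
    [/\ size P = #|A|,
        uniq (flatten P),
        forall p, p \in P -> dpath e p &
        forall p, p \in P -> exists x s, [/\ p = x :: s, x \in A,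
                                             last x s \in B &
                                             forall v, v \in p -> v \notin X]].

Definition well_linked (T : finType) (e : rel T) (W : {set T}) : Prop :=
  forall A B : {set T}, A \subset W -> B \subset W -> #|A| = #|B| ->
    linkage_avoiding e (W :\: (A :|: B)) A B.

Definition dcycle (T : finType) (e : rel T) (c : seq T) : bool :=
  [&& c != [::], uniq c & cycle e c].

(* A family of k (distinct) directed cycles such that every vertex lies
   in at most two of them. Cycles are distinct up to rotation of their
   vertex sequence. *)
Definition half_integral_packing (T : finType) (e : rel T) (k : nat)
    (C : 'I_k -> seq T) : Prop :=
  [/\ forall i, dcycle e (C i),
      forall i j, i != j -> forall n, rot n (C i) != C j &
      forall v : T, #|[set i | v \in C i]| <= 2].

(* Main.v *)
Require Import Defs.
From mathcomp Require Import all_boot zify.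
Set Implicit Arguments. Unset Strict Implicit. Unset Printing Implicit Defensive.

Lemma flatten_disj (T : eqType) (P : seq (seq T)) p p' v :
  uniq (flatten P) -> p \in P -> p' \in P -> v \in p -> v \in p' -> p = p'.
Proof.
elim: P => [|q P IH] //=; rewrite cat_uniq => /and3P[_ dq uP].
rewrite !inE => /orP[/eqP->|pP] /orP[/eqP->|pP'] vp vp' //.
- have vf : v \in flatten P by apply/flattenP; exists p'.
  by move: dq => /hasPn /(_ v vf); rewrite /= vp.
- have vf : v \in flatten P by apply/flattenP; exists p.
  by move: dq => /hasPn /(_ v vf); rewrite /= vp'.
- exact: IH.
Qed.

Lemma flatten_uniqP (T : eqType) (P : seq (seq T)) :
  uniq (flatten P) -> [::] \notin P -> uniq P.
Proof.
elim: P => [|q P IH] //=; rewrite cat_uniq inE negb_or => /and3P[_ dq uP] /andP[qn nP].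
rewrite IH // andbT; apply/negP => qP.
case: q qn dq qP => [|x q] // _ /hasPn /(_ x) H qP.
have xf : x \in flatten P by apply/flattenP; exists (x :: q) => //; exact: mem_head.
by move: (H xf); rewrite mem_head.
Qed.

Lemma link_onto (T : finType) (P : seq (seq T)) (A : {set T}) (f : seq T -> T) :
  uniq (flatten P) -> [::] \notin P -> size P = #|A| ->
  (forall p, p \in P -> f p \in p) -> (forall p, p \in P -> f p \in A) ->
  forall a, a \in A -> exists2 p, p \in P & f p = a.
Proof.
move=> uf nP sz fin fA a aA.
have inj : {in P &, injective f}.
  move=> p p' pP p'P fe; apply: (flatten_disj uf pP p'P (fin p pP)).
  by rewrite fe; apply: fin.
have um : uniq (map f P) by rewrite map_inj_in_uniq // flatten_uniqP.
have sub : {subset map f P <= enum A}.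
  by move=> x /mapP[p pP ->]; rewrite mem_enum fA.
have sz2 : size (enum A) <= size (map f P) by rewrite size_map sz -cardE.
have [_ eqm] := uniq_min_size um sub sz2.
by have := eqm a; rewrite mem_enum aA => /mapP[p pP ->]; exists p.
Qed.

Lemma nuniq_split (T : eqType) (s : seq T) : ~~ uniq s ->
  exists v s1 s2 s3, s = s1 ++ v :: s2 ++ v :: s3.
Proof.
elim: s => [|x s IH] //=; rewrite negb_and negbK => /orP[xs|/IH[v [s1 [s2 [s3 ->]]]]].
  by case/splitPr: xs => s2 s3; exists x, [::], s2, s3.
by exists v, (x :: s1), s2, s3.
Qed.

Lemma reduce_walk (T : finType) (e : rel T) (D1 : {set T}) w :
  cycle e w -> has (mem D1) w ->
  exists cs : seq (seq T),
    [/\ forall c, c \in cs -> [&& uniq c, c != [::], cycle e c & has (mem D1) c],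
        forall v, count_mem v (flatten cs) <= count_mem v w &
        forall x, x \in D1 -> x \in w -> x \in flatten cs].
Proof.
have [n] := ubnP (size w); elim: n w => // n IH w szw cw hw.
case uw: (uniq w).
  exists [:: w]; split => //.
  - move=> c; rewrite inE => /eqP ->; rewrite uw cw hw andbT /=.
    by case: (w) hw.
  - by move=> v; rewrite /= cats0.
  - by move=> x _; rewrite /= cats0.
have [v [s1 [s2 [s3 ew]]]] := nuniq_split (negbT uw).
set w1 := v :: s2; set w2 := v :: (s3 ++ s1).
have rw : rot (size s1) w = w1 ++ w2.
  by rewrite ew rot_size_cat /w1 /w2 /= -catA.
have cw' : cycle e (w1 ++ w2) by rewrite -rw rot_cycle.
have cnt : forall u, count_mem u w = count_mem u w1 + count_mem u w2.
  by move=> u; rewrite -count_cat -rw; apply/permP; rewrite perm_sym perm_rot.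
have memw : forall u, (u \in w) = (u \in w1) || (u \in w2).
  by move=> u; rewrite -mem_cat -rw mem_rot.
move: cw'; rewrite /w1 /w2 /= rcons_cat cat_path /= => /and3P[p1 e1 p2].
have c1 : cycle e w1 by rewrite /w1 /= rcons_path p1 e1.
have c2 : cycle e w2 by rewrite /w2 /= p2.
have sz1 : size w1 < n.
  by move: szw; rewrite ew /w1 /= !size_cat /= size_cat /=; lia.
have sz2 : size w2 < n.
  by move: szw; rewrite ew /w2 /= !size_cat /= !size_cat /=; lia.
case h1: (has (mem D1) w1); case h2: (has (mem D1) w2).
- have [cs1 [P1 C1 M1]] := IH w1 sz1 c1 h1.
  have [cs2 [P2 C2 M2]] := IH w2 sz2 c2 h2.
  exists (cs1 ++ cs2); split.
  + by move=> c; rewrite mem_cat => /orP[/P1|/P2].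
  + by move=> u; rewrite flatten_cat count_cat cnt leq_add.
  + move=> x xD; rewrite memw flatten_cat mem_cat => /orP[/(M1 x xD)->//|/(M2 x xD)->]; by rewrite orbT.
- have [cs1 [P1 C1 M1]] := IH w1 sz1 c1 h1.
  exists cs1; split => //.
  + by move=> u; rewrite cnt; apply: leq_trans (C1 u) (leq_addr _ _).
  + move=> x xD; rewrite memw => /orP[/(M1 x xD)//|xw2].
    by move/negbT: h2 => /hasPn /(_ x xw2); rewrite /= xD.
- have [cs2 [P2 C2 M2]] := IH w2 sz2 c2 h2.
  exists cs2; split => //.
  + by move=> u; rewrite cnt; apply: leq_trans (C2 u) (leq_addl _ _).
  + move=> x xD; rewrite memw => /orP[xw1|/(M2 x xD)//].
    by move/negbT: h1 => /hasPn /(_ x xw1); rewrite /= xD.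
- by move: hw; rewrite -(has_rot (size s1)) rw has_cat h1 h2.
Qed.

Definition is_link (T : finType) (e : rel T) (A B : {set T}) (P : seq (seq T)) :=
  [/\ size P = #|A|, uniq (flatten P), forall p, p \in P -> dpath e p &
      forall p, p \in P -> exists x s, [/\ p = x :: s, x \in A & last x s \in B]].

Definition pick (T : eqType) (P : seq (seq T)) (u : T) :=
  nth [::] P (find (fun p => ohead p == Some u) P).

Lemma link_nil (T : finType) e A B (P : seq (seq T)) : is_link e A B P -> [::] \notin P.
Proof. by case=> _ _ dp _; apply/negP => /dp. Qed.

Lemma pick_spec (T : finType) e A B (P : seq (seq T)) a :
  is_link e A B P -> a \in A -> pick P a \in P /\ pick P a = a :: behead (pick P a).
Proof.
move=> L aA; have nP := link_nil L; case: L => sz uf dp hp.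
have [p pP hpa] : exists2 p, p \in P & head a p = a.
  apply: (link_onto uf nP sz) => // p pP; have [x [s [-> xA _]]] := hp p pP.
    by rewrite /= mem_head.
  by [].
have hasP : has (fun p => ohead p == Some a) P.
  apply/hasP; exists p => //; have [x [s [ep _ _]]] := hp p pP.
  by move: hpa; rewrite ep /= => ->.
have := nth_find [::] hasP; rewrite -/(pick P a) => H; split.
  by rewrite /pick mem_nth // -has_find.
by move: H; case: (pick P a) => //= x s /eqP [->].
Qed.

Lemma pick_eq (T : finType) e A B (P : seq (seq T)) p x s :
  is_link e A B P -> p \in P -> p = x :: s -> pick P x = p.
Proof.
move=> L pP ep; have xA : x \in A.
  by case: L => _ _ _ /(_ p pP) [y [t [ep' yA _]]]; move: ep'; rewrite ep => -[->].
have [pkP pkE] := pick_spec L xA.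
case: L => _ uf _ _; apply: (flatten_disj uf pkP pP (v := x)).
  by rewrite pkE mem_head.
by rewrite ep mem_head.
Qed.

Definition yv (T : eqType) (L : seq (seq T)) u := last u (pick L u).
Definition sig (T : eqType) (L M : seq (seq T)) u := last u (pick M (yv L u)).
Definition seg (T : eqType) (L M : seq (seq T)) u :=
  behead (pick L u) ++ behead (pick M (yv L u)).

Lemma pick_last (T : finType) e A B (P : seq (seq T)) a :
  is_link e A B P -> a \in A -> last a (pick P a) \in B.
Proof.
move=> L aA; have [pP pE] := pick_spec L aA.
case: L => _ _ _ /(_ _ pP) [x [s [ep _ lB]]].
by move: pE lB; rewrite ep => -[<-].
Qed.

Lemma pick_lastd (T : finType) e A B (P : seq (seq T)) a d :
  is_link e A B P -> a \in A -> last d (pick P a) = last a (pick P a).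
Proof. by move=> L aA; have [_ pE] := pick_spec L aA; rewrite pE. Qed.

Lemma pick_path (T : finType) e A B (P : seq (seq T)) a :
  is_link e A B P -> a \in A -> path e a (behead (pick P a)).
Proof.
move=> L aA; have [pP pE] := pick_spec L aA.
case: L => _ _ /(_ _ pP) + _; rewrite pE /dpath => /andP[].
by rewrite -pE.
Qed.

Lemma yv_in (T : finType) e D1 D2 (L : seq (seq T)) u :
  is_link e D1 D2 L -> u \in D1 -> yv L u \in D2.
Proof. exact: pick_last. Qed.

Lemma sig_in (T : finType) e D1 D2 (L M : seq (seq T)) u :
  is_link e D1 D2 L -> is_link e D2 D1 M -> u \in D1 -> sig L M u \in D1.
Proof.
move=> HL HM uD; have yD := yv_in HL uD.
by rewrite /sig (pick_lastd _ HM yD); apply: (pick_last HM).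
Qed.

Lemma seg_path (T : finType) e D1 D2 (L M : seq (seq T)) u :
  is_link e D1 D2 L -> is_link e D2 D1 M -> u \in D1 ->
  path e u (seg L M u) /\ last u (seg L M u) = sig L M u.
Proof.
move=> HL HM uD; have yD := yv_in HL uD.
have [_ pE] := pick_spec HL uD; have [_ qE] := pick_spec HM yD.
have p1 := pick_path HL uD; have p2 := pick_path HM yD.
have ly : last u (behead (pick L u)) = yv L u by rewrite /yv {2}pE.
rewrite /seg cat_path p1 last_cat ly p2; split => //.
by rewrite /sig {2}qE.
Qed.

Lemma seg_nil (T : finType) e D1 D2 (L M : seq (seq T)) u :
  is_link e D1 D2 L -> is_link e D2 D1 M -> [disjoint D1 & D2] -> u \in D1 ->
  seg L M u != [::].
Proof.
move=> HL HM dj uD; have yD := yv_in HL uD; have [_ pE] := pick_spec HL uD.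
move: yD; rewrite /yv /seg pE /=; case: (behead (pick L u)) => //= yD.
by move: dj => /disjointFr /(_ uD); rewrite yD.
Qed.

Lemma sig_inj (T : finType) e D1 D2 (L M : seq (seq T)) :
  is_link e D1 D2 L -> is_link e D2 D1 M -> {in D1 &, injective (sig L M)}.
Proof.
move=> HL HM u u' uD u'D.
have yD := yv_in HL uD; have y'D := yv_in HL u'D.
have [qP qE] := pick_spec HM yD; have [q'P q'E] := pick_spec HM y'D.
have [pP pE] := pick_spec HL uD; have [p'P p'E] := pick_spec HL u'D.
move=> es.
have eq1 : pick M (yv L u) = pick M (yv L u').
  case: HM => _ uf _ _; apply: (flatten_disj uf qP q'P (v := sig L M u)).
    by rewrite /sig qE /= mem_last.
  by rewrite es /sig q'E /= mem_last.
have ey : yv L u = yv L u' by move: eq1; rewrite {1}qE {1}q'E => -[].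
have eq2 : pick L u = pick L u'.
  case: HL => _ uf _ _; apply: (flatten_disj uf pP p'P (v := yv L u)).
    by rewrite /yv pE /= mem_last.
  by rewrite ey /yv p'E /= mem_last.
by move: pE; rewrite eq2 p'E => -[].
Qed.

Lemma walk_path (T : finType) e D1 D2 (L M : seq (seq T)) :
  is_link e D1 D2 L -> is_link e D2 D1 M ->
  forall zs z, all (mem D1) (z :: zs) -> fpath (sig L M) z zs ->
  path e z (flatten (map (seg L M) (z :: zs))) /\
  last z (flatten (map (seg L M) (z :: zs))) = sig L M (last z zs).
Proof.
move=> HL HM; elim=> [|z' zs IH] z /=.
  by rewrite andbT cats0 => zD _; apply: (seg_path HL HM).
move=> /and3P[zD z'D aD] /andP[/eqP ez fp].
have [p1 l1] := seg_path HL HM zD.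
have aD' : all (mem D1) (z' :: zs) by rewrite /= z'D.
have [p2 l2] := IH z' aD' fp.
by rewrite cat_path p1 last_cat l1 ez p2 l2.
Qed.

Lemma cycle_of_path (T : eqType) (e : rel T) z W :
  W != [::] -> path e z W -> last z W = z -> cycle e W.
Proof.
case: W => [|a W] //= _ /andP[eza p] l.
by rewrite /cycle rcons_path p l eza.
Qed.

Lemma walk_cycle (T : finType) e D1 D2 (L M : seq (seq T)) (O : seq T) :
  is_link e D1 D2 L -> is_link e D2 D1 M -> [disjoint D1 & D2] ->
  O != [::] -> all (mem D1) O -> fcycle (sig L M) O ->
  cycle e (flatten (map (seg L M) O)).
Proof.
move=> HL HM dj; case: O => [|z zs] // _ aD.
rewrite /= rcons_path => /andP[fp /eqP el].
have [p l] := walk_path HL HM aD fp.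
have zD : z \in D1 by move: aD => /andP[].
apply: (cycle_of_path (z := z)) => //; last by rewrite l el.
by rewrite /=; have := seg_nil HL HM dj zD; case: (seg L M z).
Qed.

Lemma iter_in (T : finType) (f : T -> T) (S : {set T}) x i :
  (forall u, u \in S -> f u \in S) -> x \in S -> iter i f x \in S.
Proof. by move=> fS xS; elim: i => //= i IH; apply: fS. Qed.

Lemma orbit_sub (T : finType) (f : T -> T) (S : {set T}) x :
  (forall u, u \in S -> f u \in S) -> x \in S -> {subset orbit f x <= S}.
Proof. by move=> fS xS y /trajectP[i _ ->]; apply: iter_in. Qed.

Lemma cycles_of (T : finType) e D1 D2 (L M : seq (seq T)) :
  is_link e D1 D2 L -> is_link e D2 D1 M -> [disjoint D1 & D2] ->
  forall S : {set T}, S \subset D1 -> (forall u, u \in S -> sig L M u \in S) ->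
  exists cs : seq (seq T),
    [/\ forall c, c \in cs -> [&& uniq c, c != [::], cycle e c & has (mem D1) c],
        forall v, count_mem v (flatten cs) <= count_mem v (flatten (map (seg L M) (enum S))) &
        forall x, x \in S -> x \in flatten cs].
Proof.
move=> HL HM dj S; have [n] := ubnP #|S|; elim: n S => // n IH S szS sD sS.
case: (boolP (S == set0)) => [/eqP S0|/set0Pn [x xS]].
  by exists [::]; split => // y; rewrite S0 inE.
set f := sig L M.
have injS : {in S &, injective f}.
  by move=> u u' uS u'S; apply: (sig_inj HL HM); apply: (subsetP sD).
set O := orbit f x.
have OS : {subset O <= S} by apply: orbit_sub.
have fcO : fcycle f O by apply: (cycle_orbit_in sS injS).
have xO : x \in O by apply: in_orbit.
have On : O != [::] by case: (O) xO.
have aO : all (mem D1) O by apply/allP => y /OS /(subsetP sD).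
set W := flatten (map (seg L M) O).
have cW : cycle e W by apply: (walk_cycle HL HM).
have inW : forall u, u \in O -> f u \in W.
  move=> u uO; apply/flattenP; exists (seg L M u); first by apply: map_f.
  have uD : u \in D1 by apply: (subsetP sD); apply: OS.
  have [_ l] := seg_path HL HM uD; rewrite /f -l.
  by have := seg_nil HL HM dj uD; case: (seg L M u) => //= a s _; rewrite mem_last.
have OW : forall y, y \in O -> y \in W.
  move=> y yO; have := prev_cycle fcO yO => /eqP <-; apply: inW.
  by rewrite mem_prev.
have hW : has (mem D1) W.
  by apply/hasP; exists x; [apply: OW | apply: (subsetP sD)].
have [cs1 [P1 C1 M1]] := reduce_walk cW hW.
set S' := S :\: [set y in O].
have sz' : #|S'| < n.
  have : S' \subset S :\ x.
    by apply/subsetP => y; rewrite !inE => /andP[yO ->]; rewrite andbT; apply: contra yO => /eqP->.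
  move/subset_leq_card; move: szS; rewrite (cardsD1 x S) xS; lia.
have sD' : S' \subset D1 by apply: subset_trans sD; apply: subsetDl.
have sS' : forall u, u \in S' -> f u \in S'.
  move=> u; rewrite !inE => /andP[uO uS]; rewrite sS // andbT.
  apply: contra uO => fuO.
  have fxu : fconnect f x (f u) by rewrite fconnect_orbit.
  have fuS : f u \in S by apply: sS.
  rewrite -fconnect_orbit (fconnect_sym_in sS injS) //.
  apply: connect_trans (fconnect1 _ u) _.
  by rewrite (fconnect_sym_in sS injS).
have [cs2 [P2 C2 M2]] := IH S' sz' sD' sS'.
have pe : perm_eq (enum S) (O ++ enum S').
  apply: uniq_perm; first exact: enum_uniq.
    rewrite cat_uniq orbit_uniq enum_uniq andbT /=.
    by apply/hasPn => y; rewrite mem_enum !inE => /andP[].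
  move=> y; rewrite mem_enum mem_cat mem_enum !inE.
  by case yO: (y \in O) => //=; rewrite OS.
exists (cs1 ++ cs2); split.
- by move=> c; rewrite mem_cat => /orP[/P1|/P2].
- move=> v; rewrite (permP (perm_flatten (perm_map (seg L M) pe))) map_cat !flatten_cat !count_cat.
  exact: leq_add.
- move=> y yS; rewrite flatten_cat mem_cat; case yO: (y \in O).
    by rewrite M1 // ?OW // (subsetP sD).
  by rewrite M2 ?orbT // !inE yO yS.
Qed.

Lemma sub_count_flatten (T : eqType) (s P : seq (seq T)) v :
  uniq s -> {subset s <= P} -> uniq P ->
  count_mem v (flatten s) <= count_mem v (flatten P).
Proof.
move=> us sP uP.
have pe : perm_eq (filter (mem s) P) s.
  apply: uniq_perm; [exact: filter_uniq | exact: us |].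
  by move=> p; rewrite mem_filter; apply/andP/idP => [[]//|ps]; split => //; apply: sP.
have pf : perm_eq ([seq x <- P | mem s x] ++ [seq x <- P | predC (mem s) x]) P by rewrite perm_filterC.
rewrite -(permP (perm_flatten pf)) flatten_cat count_cat.
by rewrite (permP (perm_flatten pe)) leq_addr.
Qed.

Lemma pick_inj (T : finType) e A B (P : seq (seq T)) :
  is_link e A B P -> {in A &, injective (pick P)}.
Proof.
move=> HL a a' aA a'A eq; have [_ pE] := pick_spec HL aA; have [_ p'E] := pick_spec HL a'A.
by move: pE; rewrite eq p'E => -[].
Qed.

Lemma yv_inj (T : finType) e D1 D2 (L : seq (seq T)) :
  is_link e D1 D2 L -> {in D1 &, injective (yv L)}.
Proof.
move=> HL u u' uD u'D ey; apply: (pick_inj HL) => //.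
have [pP pE] := pick_spec HL uD; have [p'P p'E] := pick_spec HL u'D.
case: HL => _ uf _ _; apply: (flatten_disj uf pP p'P (v := yv L u)).
  by rewrite /yv pE /= mem_last.
by rewrite ey /yv p'E /= mem_last.
Qed.

Lemma link_count1 (T : finType) e A B (P : seq (seq T)) v :
  is_link e A B P -> count_mem v (flatten P) <= 1.
Proof. by case=> _ uf _ _; rewrite count_uniq_mem // leq_b1. Qed.

Lemma count_segs (T : eqType) (L M : seq (seq T)) s v :
  count_mem v (flatten (map (seg L M) s)) =
  count_mem v (flatten (map (fun u => behead (pick L u)) s)) +
  count_mem v (flatten (map (fun u => behead (pick M (yv L u))) s)).
Proof.
elim: s => //= u s IH; rewrite /seg !count_cat IH -/(seg L M); lia.
Qed.

Lemma count_behead (T : eqType) (f : T -> seq T) s v :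
  count_mem v (flatten (map (fun u => behead (f u)) s)) <= count_mem v (flatten (map f s)).
Proof.
elim: s => //= u s IH; rewrite !count_cat leq_add //.
by case: (f u) => //= a l; rewrite leq_addl.
Qed.

Lemma segs_count (T : finType) e D1 D2 (L M : seq (seq T)) v :
  is_link e D1 D2 L -> is_link e D2 D1 M ->
  count_mem v (flatten (map (seg L M) (enum D1))) <= 2 /\
  (v \in D1 -> count_mem v (flatten (map (seg L M) (enum D1))) <= 1).
Proof.
move=> HL HM; rewrite count_segs.
have c1 : count_mem v (flatten (map (pick L) (enum D1))) <= 1.
  apply: leq_trans (link_count1 v HL); apply: sub_count_flatten.
  - rewrite map_inj_in_uniq ?enum_uniq //.
    by move=> u u'; rewrite !mem_enum; apply: (pick_inj HL).
  - by move=> p /mapP[u]; rewrite mem_enum => uD ->; case: (pick_spec HL uD).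
  - by apply: flatten_uniqP; [case: HL | apply: (link_nil HL)].
have c2 : count_mem v (flatten (map (fun u => pick M (yv L u)) (enum D1))) <= 1.
  apply: leq_trans (link_count1 v HM); apply: sub_count_flatten.
  - rewrite map_inj_in_uniq ?enum_uniq //.
    move=> u u'; rewrite !mem_enum => uD u'D eq.
    by apply: (yv_inj HL) => //; apply: (pick_inj HM) => //; apply: (yv_in HL).
  - by move=> p /mapP[u]; rewrite mem_enum => uD ->; case: (pick_spec HM (yv_in HL uD)).
  - by apply: flatten_uniqP; [case: HM | apply: (link_nil HM)].
have b1 := count_behead (pick L) (enum D1) v.
have b2 := count_behead (fun u => pick M (yv L u)) (enum D1) v.
split; first by lia.
move=> vD.
suff -> : count_mem v (flatten (map (fun u => behead (pick L u)) (enum D1))) = 0 by lia.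
apply/eqP; rewrite -leqn0 leqNgt -has_count; apply/hasP => -[w /flattenP[p /mapP[u]]].
rewrite mem_enum => uD -> wp /eqP ew; subst w.
have [pP pE] := pick_spec HL uD; have [qP qE] := pick_spec HL vD.
have eq : pick L u = pick L v.
  case: HL => _ uf _ _; apply: (flatten_disj uf pP qP (v := v)).
    by rewrite pE inE wp orbT.
  by rewrite qE mem_head.
move: wp; rewrite eq; case: HL => _ _ /(_ _ qP); rewrite /dpath qE => /andP[_].
by rewrite cons_uniq => /andP[/negP].
Qed.

Lemma count_flatten_nth (T : eqType) (cs : seq (seq T)) v :
  count_mem v (flatten cs) = \sum_(i < size cs) count_mem v (nth [::] cs i).
Proof.
elim: cs => [|c cs IH] /=; first by rewrite big_ord0.
by rewrite count_cat big_ord_recl /= IH.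
Qed.

Lemma mult_bound (T : finType) (cs : seq (seq T)) k v :
  k <= size cs ->
  #|[set i : 'I_k | v \in nth [::] cs i]| <= count_mem v (flatten cs).
Proof.
move=> ks; rewrite count_flatten_nth -sum1_card big_mkcond /=.
have -> : \sum_(i < k) (if i \in [set i0 : 'I_k | v \in nth [::] cs i0] then 1 else 0)
   = \sum_(i < k) (fun j : nat => nat_of_bool (v \in nth [::] cs j)) i.
  by apply: eq_bigr => i _; rewrite inE; case: (v \in _).
rewrite (big_ord_widen _ (fun j : nat => nat_of_bool (v \in nth [::] cs j)) ks) big_mkcond /=.
apply: leq_sum => i _; case: ifP => // _.
case vc: (v \in _) => //=; rewrite lt0n; apply/negP => /eqP/count_memPn; by rewrite vc.
Qed.

Lemma sumn_bound (T : eqType) (cs : seq (seq T)) (f : seq T -> nat) m :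
  (forall c, c \in cs -> f c <= m) -> sumn (map f cs) <= m * size cs.
Proof.
elim: cs => //= c cs IH H; rewrite mulnS leq_add ?H ?mem_head //.
by apply: IH => c' c'cs; apply: H; rewrite inE c'cs orbT.
Qed.

Lemma pack_or_long (T : finType) e (D1 : {set T}) (cs : seq (seq T)) k m :
  (forall c, c \in cs -> [&& uniq c, c != [::], cycle e c & has (mem D1) c]) ->
  (forall v, count_mem v (flatten cs) <= 2) ->
  (forall x, x \in D1 -> count_mem x (flatten cs) <= 1) ->
  (forall x, x \in D1 -> x \in flatten cs) ->
  ~ (exists C : 'I_k -> seq T, half_integral_packing e C) ->
  m * (k - 1) < #|D1| ->
  exists2 c, c \in cs & m < count (mem D1) c.
Proof.
move=> Hc C2 C1 Cov NP lt.
case: (leqP k (size cs)) => ks.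
  exfalso; apply: NP; exists (fun i => nth [::] cs i); split.
  - move=> i; have := Hc _ (mem_nth [::] (leq_trans (ltn_ord i) ks)).
    by rewrite /dcycle => /and4P[-> -> -> _].
  - move=> i j ij n; apply/negP => /eqP E.
    have := Hc _ (mem_nth [::] (leq_trans (ltn_ord i) ks)) => /and4P[_ _ _ /hasP[x xc xD]].
    have xcj : x \in nth [::] cs j by rewrite -E mem_rot.
    have := mult_bound x ks; have := C1 x xD.
    have sub : [set i; j] \subset [set l : 'I_k | x \in nth [::] cs l].
      by apply/subsetP => l; rewrite !inE => /orP[] /eqP ->.
    have := subset_leq_card sub; rewrite cards2 ij /=; lia.
  - by move=> v; apply: leq_trans (mult_bound v ks) (C2 v).
case: (boolP (has (fun c => m < count (mem D1) c) cs)) => [/hasP[c cc lc]|/hasPn H].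
  by exists c.
exfalso.
have h1 : count (mem D1) (flatten cs) <= m * size cs.
  by rewrite count_flatten; apply: sumn_bound => c cc; rewrite leqNgt H.
have h2 : #|D1| <= count (mem D1) (flatten cs).
  rewrite cardE -size_filter; apply: uniq_leq_size; first exact: enum_uniq.
  by move=> x; rewrite mem_enum mem_filter => xD; apply/andP; split; [exact: xD | exact: Cov].
have h3 : m * size cs <= m * (k - 1) by rewrite leq_mul2l; apply/orP; right; lia.
lia.
Qed.

Lemma filter_index_mono (T : eqType) (p : pred T) c x0 j j' :
  uniq c -> j < j' -> j' < size (filter p c) ->
  index (nth x0 (filter p c) j) c < index (nth x0 (filter p c) j') c.
Proof.
elim: c j j' => [|u c IH] j j' //= /andP[uc uq].
have idx : forall y, y \in filter p c -> (u == y) = false.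
  move=> y; rewrite mem_filter => /andP[_ yc].
  by apply/eqP => eq; move: uc; rewrite eq yc.
case: (p u) => /=.
  case: j' => // j'; case: j => [|j] jj' sz /=.
    by rewrite eqxx idx // mem_nth.
  rewrite !idx ?mem_nth //; try lia.
  by rewrite ltnS; apply: IH.
move=> jj' sz.
rewrite !idx ?mem_nth //; try lia.
by rewrite ltnS; apply: IH.
Qed.

Definition slice (T : Type) (c : seq T) lo hi := drop lo (take hi.+1 c).

Lemma size_slice (T : Type) (c : seq T) lo hi :
  hi < size c -> size (slice c lo hi) = hi.+1 - lo.
Proof. by move=> h; rewrite /slice size_drop size_takel. Qed.

Lemma nth_slice (T : Type) (c : seq T) x0 lo hi t :
  lo + t <= hi -> nth x0 (slice c lo hi) t = nth x0 c (lo + t).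
Proof. by move=> h; rewrite /slice nth_drop nth_take. Qed.

Lemma slice_nth (T : eqType) (c : seq T) x0 lo hi I :
  uniq c -> lo <= I -> I <= hi -> hi < size c ->
  nth x0 c I \in slice c lo hi /\ index (nth x0 c I) (slice c lo hi) = I - lo.
Proof.
move=> uc l1 l2 l3.
have ss : I - lo < size (slice c lo hi) by rewrite size_slice //; lia.
have e1 : nth x0 (slice c lo hi) (I - lo) = nth x0 c I.
  by rewrite nth_slice; [congr nth; lia | lia].
rewrite -e1; split; first exact: mem_nth.
by rewrite index_uniq // /slice drop_uniq // take_uniq.
Qed.

Lemma slice_mem (T : eqType) (c : seq T) lo hi v :
  uniq c -> hi < size c -> v \in slice c lo hi -> lo <= index v c <= hi.
Proof.
move=> uc hs /(nthP v) [t ts <-].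
move: ts; rewrite size_slice // => ts.
rewrite nth_slice; last by lia.
rewrite index_uniq //; lia.
Qed.

Lemma drop_path (T : eqType) (e : rel T) n : forall h t,
  path e h t -> n <= size t -> exists y ys, drop n (h :: t) = y :: ys /\ path e y ys.
Proof.
elim: n => [|n IH] h t p ns; first by exists h, t.
case: t p ns => [|h' t] //= /andP[_ p] ns.
exact: IH.
Qed.

Lemma slice_dpath (T : finType) (e : rel T) h t lo hi :
  path e h t -> uniq (h :: t) -> lo <= hi -> hi < size (h :: t) -> dpath e (slice (h :: t) lo hi).
Proof.
move=> p u l1 l2; rewrite /slice /=.
have pt : path e h (take hi t) by apply: take_path.
have ls : lo <= size (take hi t) by move: l2 => /= l2; rewrite size_take; case: ifP => _; lia.
have [y [ys [E py]]] := drop_path pt ls.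
rewrite E /dpath py -E drop_uniq //.
by rewrite -/(take hi.+1 (h :: t)) take_uniq.
Qed.

Lemma disjP (T : finType) (A B : {pred T}) :
  (forall v, v \in A -> v \in B -> False) -> [disjoint A & B].
Proof. move=> H; rewrite disjoint_subset; apply/subsetP => v vA; rewrite inE; apply/negP; exact: H vA. Qed.

Lemma mm (b i j : nat) : i < j -> 2*b*i + 2*b <= 2*b*j. Proof. move=> h; nia. Qed.

Lemma chunk (T : finType) e (D1 : {set T}) h t a b :
  path e h t -> uniq (h :: t) -> 2 * a * b < count (mem D1) (h :: t) -> 1 <= b ->
  exists (P : 'I_a -> seq T) (A B : 'I_a -> {set T}),
    [/\ forall i, [/\ dpath e (P i), {subset A i <= P i} & {subset B i <= P i}],
        forall i j, i != j -> [disjoint P i & P j],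
        (forall i, #|A i| = b /\ #|B i| = b) /\
        (forall i j, [disjoint A i & B j] /\
           (i != j -> [disjoint A i & A j] /\ [disjoint B i & B j])),
        forall i x y, x \in A i -> y \in B i -> index x (P i) < index y (P i) &
        forall i, (A i :|: B i) \subset D1].
Proof.
move=> pt uc sz b1.
set c := h :: t; set f := filter (mem D1) c.
have szf : 2 * a * b < size f by rewrite size_filter.
pose d j := nth h f j; pose pos j := index (d j) c.
have dc : forall j, j < size f -> d j \in c.
  by move=> j js; have := mem_nth h js; rewrite mem_filter => /andP[].
have dD : forall j, j < size f -> d j \in D1.
  by move=> j js; have := mem_nth h js; rewrite mem_filter => /andP[].
have posc : forall j, j < size f -> pos j < size c by move=> j js; rewrite index_mem dc.
have posm : forall j j', j < j' -> j' < size f -> pos j < pos j'.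
  by move=> j j' jj js; apply: filter_index_mono.
have posl : forall j j', j <= j' -> j' < size f -> pos j <= pos j'.
  move=> j j' jj js; case: (ltngtP j j') jj => // [jj _|-> _//]; exact: ltnW (posm _ _ jj js).
have npos : forall j, j < size f -> nth h c (pos j) = d j by move=> j js; rewrite nth_index ?dc.
have dinj : forall j j', j < size f -> j' < size f -> d j = d j' -> j = j'.
  move=> j j' js js' E; apply/eqP; rewrite -(nth_uniq h js js') ?filter_uniq //.
  by apply/eqP.
have ia : forall i : 'I_a, 2*b*i + 2*b <= 2*a*b.
  move=> i; have := ltn_ord i; nia.
pose lo (i : 'I_a) := pos (2*b*i); pose hi (i : 'I_a) := pos (2*b*i + (2*b-1)).
have hil : forall i, hi i < size c by move=> i; apply: posc; have := ia i; lia.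
have lohi : forall i, lo i <= hi i by move=> i; apply: posl; [lia | have := ia i; lia].
have inS : forall (i : 'I_a) J, 2*b*i <= J -> J <= 2*b*i + (2*b-1) ->
    d J \in slice c (lo i) (hi i) /\ index (d J) (slice c (lo i) (hi i)) = pos J - lo i.
  move=> i J l1 l2; have Js : J < size f by have := ia i; lia.
  rewrite -(npos J Js); apply: slice_nth => //; apply: posl => //; have := ia i; lia.
exists (fun i => slice c (lo i) (hi i)),
       (fun i : 'I_a => [set d (2*b*i + j) | j : 'I_b]),
       (fun i : 'I_a => [set d (2*b*i + b + j) | j : 'I_b]).
split.
- move=> i; split.
  + exact: slice_dpath.
  + move=> x /imsetP[j _ ->]; have := ltn_ord j => jb.
    by have [] := inS i (2*b*i + j); first lia; first lia.
  + move=> x /imsetP[j _ ->]; have := ltn_ord j => jb.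
    by have [] := inS i (2*b*i + b + j); first lia; first lia.
- move=> i j ij; apply: disjP => v vi vj.
  have := slice_mem uc (hil i) vi; have := slice_mem uc (hil j) vj.
  case: (ltngtP i j) => ij0.
  + have : hi i < lo j by apply: posm; [have := mm b ij0; lia | have := ia j; lia].
    lia.
  + have : hi j < lo i by apply: posm; [have := mm b ij0; lia | have := ia i; lia].
    lia.
  + by move: ij; rewrite (val_inj ij0) eqxx.
- have fb : forall i : 'I_a, forall (j : 'I_b), 2*b*i + b + j < size f.
    by move=> i0 j0; have := ltn_ord j0; have := ia i0; lia.
  have fa : forall i : 'I_a, forall (j : 'I_b), 2*b*i + j < size f.
    by move=> i0 j0; have := ltn_ord j0; have := ia i0; lia.
  split.
  + move=> i; split; rewrite card_imset ?card_ord //.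
      move=> j j' E; apply/val_inj => /=; have := dinj _ _ (fa i j) (fa i j') E; lia.
    move=> j j' E; apply/val_inj => /=; have := dinj _ _ (fb i j) (fb i j') E; lia.
  + move=> i j; split.
      apply: disjP => v /imsetP[j1 _ ->] /imsetP[j2 _ E].
      have := dinj _ _ (fa i j1) (fb j j2) E; have := ltn_ord j1; have := ltn_ord j2.
      case: (ltngtP i j) => ij.
      * by have := mm b ij; lia.
      * by have := mm b ij; lia.
      * by rewrite ij; lia.
    move=> ij; split.
      apply: disjP => v /imsetP[j1 _ ->] /imsetP[j2 _ E].
      have := dinj _ _ (fa i j1) (fa j j2) E; have := ltn_ord j1; have := ltn_ord j2.
      case: (ltngtP i j) => ij0.
      * by have := mm b ij0; lia.
      * by have := mm b ij0; lia.
      * by move: ij; rewrite (val_inj ij0) eqxx.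
    apply: disjP => v /imsetP[j1 _ ->] /imsetP[j2 _ E].
    have := dinj _ _ (fb i j1) (fb j j2) E; have := ltn_ord j1; have := ltn_ord j2.
    case: (ltngtP i j) => ij0.
    * by have := mm b ij0; lia.
    * by have := mm b ij0; lia.
    * by move: ij; rewrite (val_inj ij0) eqxx.
- move=> i x y /imsetP[j1 _ ->] /imsetP[j2 _ ->].
  have := ltn_ord j1; have := ltn_ord j2 => jb2 jb1.
  have [_ ->] := inS i (2*b*i + j1) ltac:(lia) ltac:(lia).
  have [_ ->] := inS i (2*b*i + b + j2) ltac:(lia) ltac:(lia).
  have : pos (2*b*i + j1) < pos (2*b*i + b + j2).
    by apply: posm; [lia | have := ia i; lia].
  have : lo i <= pos (2*b*i + j1) by apply: posl; [lia | have := ia i; lia].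
  lia.
- move=> i; apply/subsetP => x; rewrite inE => /orP[] /imsetP[j _ ->]; apply: dD.
    by have := ltn_ord j; have := ia i; lia.
  by have := ltn_ord j; have := ia i; lia.
Qed.

Lemma well_linked_sub (T : finType) (e : rel T) (W W' : {set T}) :
  W' \subset W -> well_linked e W -> well_linked e W'.
Proof.
move=> sW wl A B sA sB AB.
have [P [s1 s2 s3 s4]] := wl A B (subset_trans sA sW) (subset_trans sB sW) AB.
exists P; split => // p pP; have [x [s [ep xA lB av]]] := s4 p pP.
exists x, s; split => // v vp; apply: contra (av v vp); rewrite !inE => /andP[-> vW].
by rewrite (subsetP sW).
Qed.

Lemma link_of (T : finType) (e : rel T) X A B :
  linkage_avoiding e X A B -> exists P, is_link e A B P.
Proof.
move=> [P [s1 s2 s3 s4]]; exists P; split => // p pP.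
by have [x [s [ep xA lB _]]] := s4 p pP; exists x, s.
Qed.

Unset Implicit Arguments.

Theorem lemma19 (T : finType) (e : rel T) (a b k : nat) (D : {set T}) :
  1 <= a -> 1 <= b -> 1 <= k ->
  well_linked e D ->
  #|D| = 2 * (a * b * (2 * k - 2) + 1) ->
  ~ (exists C : 'I_k -> seq T, half_integral_packing e C) ->
  exists (P : 'I_a -> seq T) (A B : 'I_a -> {set T}),
    [/\ forall i, [/\ dpath e (P i), {subset A i <= P i} & {subset B i <= P i}],
        (* (1) *) forall i j, i != j -> [disjoint P i & P j],
        (* (2) *) (forall i, #|A i| = b /\ #|B i| = b) /\
                  (forall i j, [disjoint A i & B j] /\
                     (i != j -> [disjoint A i & A j] /\ [disjoint B i & B j])),
        (* (3) *) forall i x y, x \in A i -> y \in B i ->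
                    index x (P i) < index y (P i) &
        (* (4) *) well_linked e (\bigcup_(i < a) (A i :|: B i))].
Proof.
move=> a1 b1 k1 wl cD NP.
set n := a * b * (2 * k - 2) + 1.
set D1 : {set T} := [set x in take n (enum D)].
set D2 := D :\: D1.
have sD1 : D1 \subset D by apply/subsetP => x; rewrite inE => /mem_take; rewrite mem_enum.
have cD1 : #|D1| = n.
  rewrite cardsE (card_uniqP _) ?take_uniq ?enum_uniq // size_take -cardE cD.
  by case: ifP => //; lia.
have cD2 : #|D2| = n by rewrite cardsD (setIidPr sD1) cD1 cD; lia.
have sD2 : D2 \subset D by apply: subsetDl.
have dj : [disjoint D1 & D2] by apply: disjP => v v1; rewrite /D2 in_setD v1.
have [L HL] : exists L, is_link e D1 D2 L.
  by apply: link_of; apply: wl => //; rewrite cD1 cD2.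
have [M HM] : exists M, is_link e D2 D1 M.
  by apply: link_of; apply: wl => //; rewrite cD1 cD2.
have sigS : forall u, u \in D1 -> sig L M u \in D1 by move=> u; apply: (sig_in HL HM).
have [cs [Pc Cc Mc]] := cycles_of HL HM dj (subxx D1) sigS.
have C2 : forall v, count_mem v (flatten cs) <= 2.
  by move=> v; apply: leq_trans (Cc v) _; case: (segs_count v HL HM).
have C1 : forall x, x \in D1 -> count_mem x (flatten cs) <= 1.
  by move=> x xD; apply: leq_trans (Cc x) _; case: (segs_count x HL HM) => _ ->.
have lt : 2 * a * b * (k - 1) < #|D1| by rewrite cD1 /n; nia.
have [c cc lc] := pack_or_long Pc C2 C1 Mc NP lt.
have /and4P[uc nc cyc _] := Pc c cc.
case: c uc nc cyc lc {cc} => [|h t] // uc _ cyc lc.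
have pt : path e h t by move: cyc; rewrite /cycle rcons_path => /andP[].
have [P [A [B [H1 H2 H3 H4 H5]]]] := chunk pt uc lc b1.
exists P, A, B; split => //.
apply: (well_linked_sub _ wl); apply/bigcupsP => i _.
exact: subset_trans (H5 i) sD1.
Qed.
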